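(* Let $(A,*,\{\cdot,\cdot,\cdot\})$ be a pre-Lie-Yamaguti algebra. Then for all $x,y,z,w,t\in A$: $$\{[x,y]_C,z,w\}_D+\{[y,z]_C,x,w\}_D+\{[z,x]_C,y,w\}_D=0,$$ and $$\{x,y,\{z,w,t\}_D\}_D-\{\{x,y,z\}_D,w,t\}_D-\{\{x,y,z\},w,t\}_D+\{\{y,x,z\},w,t\}_D-\{z,\{x,y,w\}_D,t\}_D-\{z,\{x,y,w\},t\}_D+\{z,\{y,x,w\},t\}_D-\{z,w,\{x,y,t\}_D\}_D=0.$$
   Context: All vector spaces are over a field of characteristic $0$. A pre-Lie-Yamaguti algebra is a vector space $A$ with a bilinear operation $*$ and a trilinear operation $\{\cdot,\cdot,\cdot\}$ such that, writing $[x,y]_C=x*y-y*x$, $(x,y,z)=(x*y)*z-x*(y*z)$ and $\{x,y,z\}_D=\{z,y,x\}-\{z,x,y\}+(y,x,z)-(x,y,z)$, for all $x,y,z,w,t\in A$: (P1) $\{z,[x,y]_C,w\}-\{y*z,x,w\}+\{x*z,y,w\}=0$; (P2) $\{x,y,[z,w]_C\}=z*\{x,y,w\}-w*\{x,y,z\}$; (P3) $\{\{x,y,z\},w,t\}-\{\{x,y,w\},z,t\}-\{x,y,\{z,w,t\}_D\}-\{x,y,\{z,w,t\}\}+\{x,y,\{w,z,t\}\}+\{z,w,\{x,y,t\}\}_D=0$; (P4) $\{z,\{x,y,w\}_D,t\}+\{z,\{x,y,w\},t\}-\{z,\{y,x,w\},t\}+\{z,w,\{x,y,t\}_D\}+\{z,w,\{x,y,t\}\}-\{z,w,\{y,x,t\}\}=\{x,y,\{z,w,t\}\}_D-\{\{x,y,z\}_D,w,t\}$;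 (P5) $\{x,y,z\}_D*w+\{x,y,z\}*w-\{y,x,z\}*w=\{x,y,z*w\}_D-z*\{x,y,w\}_D$. *)

(* Defs.v *)
From HB Require Import structures.
From mathcomp Require Import all_boot all_order all_algebra.
Set Implicit Arguments. Unset Strict Implicit. Unset Printing Implicit Defensive.
Import GRing.Theory.
Local Open Scope ring_scope.

Section PreLY.
Variables (F : fieldType) (A : lmodType F).
Variables (mul : A -> A -> A) (tri : A -> A -> A -> A).

Definition commC (x y : A) : A := mul x y - mul y x.
Definition assoc (x y z : A) : A := mul (mul x y) z - mul x (mul y z).
Definition triD (x y z : A) : A :=
  tri z y x - tri z x y + assoc y x z - assoc x y z.

Definition bilinear_op : Prop :=
  (forall (a : F) (x x' y : A), mul (a *: x + x') y = a *: mul x y + mul x' y) /\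
  (forall (a : F) (x y y' : A), mul x (a *: y + y') = a *: mul x y + mul x y').

Definition trilinear_op : Prop :=
  (forall (a : F) (x x' y z : A), tri (a *: x + x') y z = a *: tri x y z + tri x' y z) /\
  (forall (a : F) (x y y' z : A), tri x (a *: y + y') z = a *: tri x y z + tri x y' z) /\
  (forall (a : F) (x y z z' : A), tri x y (a *: z + z') = a *: tri x y z + tri x y z').

Definition is_preLieYamaguti : Prop :=
  bilinear_op /\ trilinear_op /\
  (forall x y z w : A,
      tri z (commC x y) w - tri (mul y z) x w + tri (mul x z) y w = 0) /\
  (forall x y z w : A,
      tri x y (commC z w) = mul z (tri x y w) - mul w (tri x y z)) /\
  (forall x y z w t : A,
      tri (tri x y z) w t - tri (tri x y w) z t - tri x y (triD z w t)
      - tri x y (tri z w t) + tri x y (tri w z t) + triD z w (tri x y t) = 0) /\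
  (forall x y z w t : A,
      tri z (triD x y w) t + tri z (tri x y w) t - tri z (tri y x w) t
      + tri z w (triD x y t) + tri z w (tri x y t) - tri z w (tri y x t)
      = triD x y (tri z w t) - tri (triD x y z) w t) /\
  (forall x y z w : A,
      mul (triD x y z) w + mul (tri x y z) w - mul (tri y x z) w
      = triD x y (mul z w) - mul z (triD x y w)).

End PreLY.

(* Main.v *)
Require Import Defs.
From HB Require Import structures.
From mathcomp Require Import all_boot all_order all_algebra.
Import GRing.Theory.
Local Open Scope ring_scope.

Inductive tm := TV of nat | T0 | TA of tm & tm | TN of tm.

Section R.
Variable V : zmodType.
Fixpoint ev (env : seq V) (t : tm) : V :=
  match t with TV n => nth 0 env n | T0 => 0 | TA a b => ev env a + ev env b | TN a => - ev env a end.
Fixpoint addc (c d : seq int) : seq int :=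
  match c, d with [::], _ => d | _, [::] => c | a :: c', b :: d' => (a + b) :: addc c' d' end.
Definition oppc (c : seq int) : seq int := map (fun a => - a) c.
Definition unitc (n : nat) : seq int := ncons n 0 [:: 1].
Fixpoint nf (t : tm) : seq int :=
  match t with TV n => unitc n | T0 => [::] | TA a b => addc (nf a) (nf b) | TN a => oppc (nf a) end.
Fixpoint lin (env : seq V) (c : seq int) : V :=
  match env, c with e :: env', k :: c' => e *~ k + lin env' c' | _, _ => 0 end.
Lemma lin_nil env : lin env [::] = 0. Proof. by case: env. Qed.
Lemma lin_add env c d : lin env (addc c d) = lin env c + lin env d.
Proof.
elim: env c d => [|e env IH] [|a c] [|b d] //=; rewrite ?lin_nil ?addr0 ?add0r //.
by rewrite IH mulrzDr addrACA.
Qed.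
Lemma lin_opp env c : lin env (oppc c) = - lin env c.
Proof.
elim: env c => [|e env IH] [|a c] //=; rewrite ?oppr0 //.
by rewrite IH mulrNz opprD.
Qed.
Lemma lin_unit env n : lin env (unitc n) = nth 0 env n.
Proof.
elim: env n => [|e env IH] [|n] //=; first by rewrite lin_nil addr0.
by rewrite IH mulr0z add0r.
Qed.
Lemma ev_nf env t : ev env t = lin env (nf t).
Proof.
elim: t => [n||a IHa b IHb|a IHa] /=.
- by rewrite lin_unit.
- by rewrite lin_nil.
- by rewrite lin_add IHa IHb.
- by rewrite lin_opp IHa.
Qed.
Lemma lin_zero env c : all (fun k => k == 0) c -> lin env c = 0.
Proof.
elim: env c => [|e env IH] [|a c] //= /andP[/eqP -> /IH ->].
by rewrite mulr0z addr0.
Qed.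
Lemma refl_eq env t1 t2 :
  all (fun k => k == 0) (addc (nf t1) (oppc (nf t2))) -> ev env t1 = ev env t2.
Proof.
move=> H; apply/eqP; rewrite -subr_eq0; apply/eqP.
by rewrite !ev_nf -lin_opp -lin_add lin_zero.
Qed.
End R.

Ltac find_idx x l :=
  lazymatch l with
  | cons x _ => constr:(O)
  | cons _ ?l' => let n := find_idx x l' in constr:(S n)
  end.

Ltac mem x l :=
  lazymatch l with
  | nil => constr:(false)
  | cons x _ => constr:(true)
  | cons _ ?l' => mem x l'
  end.

Ltac collect t l :=
  lazymatch t with
  | @GRing.add _ ?a ?b => let l1 := collect a l in collect b l1
  | @GRing.opp _ ?a => collect a l
  | @GRing.zero _ => l
  | _ => let b := mem t l in lazymatch b with true => l | false => constr:(cons t l) end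
  end.

Ltac reify t l :=
  lazymatch t with
  | @GRing.add _ ?a ?b => let ra := reify a l in let rb := reify b l in constr:(TA ra rb)
  | @GRing.opp _ ?a => let ra := reify a l in constr:(TN ra)
  | @GRing.zero _ => constr:(T0)
  | _ => let n := find_idx t l in constr:(TV n)
  end.

Ltac zmod_refl :=
  lazymatch goal with
  | |- @eq ?T ?a ?b =>
    let l0 := constr:(@nil T) in
    let l1 := collect a l0 in
    let l := collect b l1 in
    let ra := reify a l in
    let rb := reify b l in
    change (@ev _ l ra = @ev _ l rb); apply: refl_eq; vm_compute; reflexivity
  end.


Theorem lemma3p8 (F : fieldType) (charF0 : [pchar F] =i pred0)
  (A : lmodType F) (mul : A -> A -> A) (tri : A -> A -> A -> A)
  (HA : is_preLieYamaguti mul tri) (x y z w t : A) :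
  triD mul tri (commC mul x y) z w + triD mul tri (commC mul y z) x w
    + triD mul tri (commC mul z x) y w = 0
  /\
  triD mul tri x y (triD mul tri z w t) - triD mul tri (triD mul tri x y z) w t
    - triD mul tri (tri x y z) w t + triD mul tri (tri y x z) w t
    - triD mul tri z (triD mul tri x y w) t - triD mul tri z (tri x y w) t
    + triD mul tri z (tri y x w) t - triD mul tri z w (triD mul tri x y t) = 0.
Proof.
move: HA => [[mD1' mD2'] [[tD1' [tD2' tD3']] [P1 [P2 [P3 [P4 P5]]]]]].
have mD1 : forall a b c, mul (a + b) c = mul a c + mul b c.
  by move=> a b c; have := mD1' 1 a b c; rewrite !scale1r.
have mD2 : forall a b c, mul c (a + b) = mul c a + mul c b.
  by move=> a b c; have := mD2' 1 c a b; rewrite !scale1r.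
have tD1 : forall a b c d, tri (a + b) c d = tri a c d + tri b c d.
  by move=> a b c d; have := tD1' 1 a b c d; rewrite !scale1r.
have tD2 : forall a b c d, tri c (a + b) d = tri c a d + tri c b d.
  by move=> a b c d; have := tD2' 1 c a b d; rewrite !scale1r.
have tD3 : forall a b c d, tri c d (a + b) = tri c d a + tri c d b.
  by move=> a b c d; have := tD3' 1 c d a b; rewrite !scale1r.
have z0 : forall u : A, u = u + u -> u = 0.
  by move=> u h; apply: (addIr u); rewrite add0r -h.
have m0l : forall c, mul 0 c = 0 by move=> c; apply: z0; rewrite -mD1 addr0.
have m0r : forall c, mul c 0 = 0 by move=> c; apply: z0; rewrite -mD2 addr0.
have t01 : forall c d, tri 0 c d = 0 by move=> c d; apply: z0; rewrite -tD1 addr0.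
have t02 : forall c d, tri c 0 d = 0 by move=> c d; apply: z0; rewrite -tD2 addr0.
have t03 : forall c d, tri c d 0 = 0 by move=> c d; apply: z0; rewrite -tD3 addr0.
have mN1 : forall a c, mul (- a) c = - mul a c.
  by move=> a c; have := mD1' (-1) a 0 c; rewrite addr0 m0l addr0 !scaleN1r.
have mN2 : forall a c, mul c (- a) = - mul c a.
  by move=> a c; have := mD2' (-1) c a 0; rewrite addr0 m0r addr0 !scaleN1r.
have tN1 : forall a c d, tri (- a) c d = - tri a c d.
  by move=> a c d; have := tD1' (-1) a 0 c d; rewrite addr0 t01 addr0 !scaleN1r.
have tN2 : forall a c d, tri c (- a) d = - tri c a d.
  by move=> a c d; have := tD2' (-1) c a 0 d; rewrite addr0 t02 addr0 !scaleN1r.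
have tN3 : forall a c d, tri c d (- a) = - tri c d a.
  by move=> a c d; have := tD3' (-1) c d a 0; rewrite addr0 t03 addr0 !scaleN1r.
split.
{
  have e0 : ((tri w (commC mul x y) z) - (tri (mul y w) x z) + (tri (mul x w) y z)) = 0.
  { exact: (P1 x y w z). }
  have e1 : ((tri w (commC mul y z) x) - (tri (mul z w) y x) + (tri (mul y w) z x)) = 0.
  { exact: (P1 y z w x). }
  have e2 : ((mul (triD mul tri y z x) w) + (mul (tri y z x) w) - (mul (tri z y x) w) - ((triD mul tri y z (mul x w)) - (mul x (triD mul tri y z w)))) = 0.
  { apply/eqP; rewrite subr_eq0; apply/eqP; exact: (P5 y z x w). }
  have e3 : ((mul (triD mul tri x z y) w) + (mul (tri x z y) w) - (mul (tri z x y) w) - ((triD mul tri x z (mul y w)) - (mul y (triD mul tri x z w)))) = 0.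
  { apply/eqP; rewrite subr_eq0; apply/eqP; exact: (P5 x z y w). }
  have e4 : ((mul (triD mul tri x y z) w) + (mul (tri x y z) w) - (mul (tri y x z) w) - ((triD mul tri x y (mul z w)) - (mul z (triD mul tri x y w)))) = 0.
  { apply/eqP; rewrite subr_eq0; apply/eqP; exact: (P5 x y z w). }
  have e5 : ((tri w (commC mul x z) y) - (tri (mul z w) x y) + (tri (mul x w) z y)) = 0.
  { exact: (P1 x z w y). }
  have e6 : ((tri w z (commC mul x y)) - ((mul x (tri w z y)) - (mul y (tri w z x)))) = 0.
  { apply/eqP; rewrite subr_eq0; apply/eqP; exact: (P2 w z x y). }
  have e7 : ((tri w y (commC mul x z)) - ((mul x (tri w y z)) - (mul z (tri w y x)))) = 0.
  { apply/eqP; rewrite subr_eq0; apply/eqP; exact: (P2 w y x z). }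
  have e8 : ((tri w x (commC mul y z)) - ((mul y (tri w x z)) - (mul z (tri w x y)))) = 0.
  { apply/eqP; rewrite subr_eq0; apply/eqP; exact: (P2 w x y z). }
  transitivity (0 - ((tri w (commC mul x y) z) - (tri (mul y w) x z) + (tri (mul x w) y z)) - ((tri w (commC mul y z) x) - (tri (mul z w) y x) + (tri (mul y w) z x)) + ((mul (triD mul tri y z x) w) + (mul (tri y z x) w) - (mul (tri z y x) w) - ((triD mul tri y z (mul x w)) - (mul x (triD mul tri y z w)))) - ((mul (triD mul tri x z y) w) + (mul (tri x z y) w) - (mul (tri z x y) w) - ((triD mul tri x z (mul y w)) - (mul y (triD mul tri x z w)))) + ((mul (triD mul tri x y z) w) + (mul (tri x y z) w) - (mul (tri y x z) w) - ((triD mul tri x y (mul z w)) - (mul z (triD mul tri x y w)))) + ((tri w (commC mul x z) y) - (tri (mul z w) x y) + (tri (mul x w) z y)) + ((tri w z (commC mul x y)) - ((mul x (tri w z y)) - (mul y (tri w z x)))) - ((tri w y (commC mul x z)) - ((mul x (tri w y z)) - (mul z (tri w y x)))) + ((tri w x (commC mul y z)) - ((mul y (tri w x z)) - (mul z (tri w x y))))).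
  { rewrite /triD /assoc /commC; rewrite ?(mD1, mD2, mN1, mN2, tD1, tD2, tD3, tN1, tN2, tN3); zmod_refl. }
  rewrite e0 e1 e2 e3 e4 e5 e6 e7 e8.
  by rewrite ?(addr0, oppr0, add0r).

}
{
  have e0 : (mul ((tri x y (commC mul z w)) - ((mul z (tri x y w)) - (mul w (tri x y z)))) t) = 0.
  { have h : ((tri x y (commC mul z w)) - ((mul z (tri x y w)) - (mul w (tri x y z)))) = 0 by apply/eqP; rewrite subr_eq0; apply/eqP; exact: (P2 x y z w). by rewrite h m0l. }
  have e1 : (mul ((mul (triD mul tri x y z) w) + (mul (tri x y z) w) - (mul (tri y x z) w) - ((triD mul tri x y (mul z w)) - (mul z (triD mul tri x y w)))) t) = 0.
  { have h : ((mul (triD mul tri x y z) w) + (mul (tri x y z) w) - (mul (tri y x z) w) - ((triD mul tri x y (mul z w)) - (mul z (triD mul tri x y w)))) = 0 by apply/eqP; rewrite subr_eq0; apply/eqP; exact: (P5 x y z w). by rewrite h m0l. }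
  have e2 : (mul w ((mul (triD mul tri x y z) t) + (mul (tri x y z) t) - (mul (tri y x z) t) - ((triD mul tri x y (mul z t)) - (mul z (triD mul tri x y t))))) = 0.
  { have h : ((mul (triD mul tri x y z) t) + (mul (tri x y z) t) - (mul (tri y x z) t) - ((triD mul tri x y (mul z t)) - (mul z (triD mul tri x y t)))) = 0 by apply/eqP; rewrite subr_eq0; apply/eqP; exact: (P5 x y z t). by rewrite h m0r. }
  have e3 : (mul ((mul (triD mul tri x y w) z) + (mul (tri x y w) z) - (mul (tri y x w) z) - ((triD mul tri x y (mul w z)) - (mul w (triD mul tri x y z)))) t) = 0.
  { have h : ((mul (triD mul tri x y w) z) + (mul (tri x y w) z) - (mul (tri y x w) z) - ((triD mul tri x y (mul w z)) - (mul w (triD mul tri x y z)))) = 0 by apply/eqP; rewrite subr_eq0; apply/eqP; exact: (P5 x y w z). by rewrite h m0l. }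
  have e4 : (mul z ((mul (triD mul tri x y w) t) + (mul (tri x y w) t) - (mul (tri y x w) t) - ((triD mul tri x y (mul w t)) - (mul w (triD mul tri x y t))))) = 0.
  { have h : ((mul (triD mul tri x y w) t) + (mul (tri x y w) t) - (mul (tri y x w) t) - ((triD mul tri x y (mul w t)) - (mul w (triD mul tri x y t)))) = 0 by apply/eqP; rewrite subr_eq0; apply/eqP; exact: (P5 x y w t). by rewrite h m0r. }
  have e5 : (mul ((tri y x (commC mul z w)) - ((mul z (tri y x w)) - (mul w (tri y x z)))) t) = 0.
  { have h : ((tri y x (commC mul z w)) - ((mul z (tri y x w)) - (mul w (tri y x z)))) = 0 by apply/eqP; rewrite subr_eq0; apply/eqP; exact: (P2 y x z w). by rewrite h m0l. }
  have e6 : ((mul (triD mul tri x y (mul w z)) t) + (mul (tri x y (mul w z)) t) - (mul (tri y x (mul w z)) t) - ((triD mul tri x y (mul (mul w z) t)) - (mul (mul w z) (triD mul tri x y t)))) = 0.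
  { apply/eqP; rewrite subr_eq0; apply/eqP; exact: (P5 x y (mul w z) t). }
  have e7 : ((mul (triD mul tri x y (mul z w)) t) + (mul (tri x y (mul z w)) t) - (mul (tri y x (mul z w)) t) - ((triD mul tri x y (mul (mul z w) t)) - (mul (mul z w) (triD mul tri x y t)))) = 0.
  { apply/eqP; rewrite subr_eq0; apply/eqP; exact: (P5 x y (mul z w) t). }
  have e8 : ((tri t (triD mul tri x y w) z) + (tri t (tri x y w) z) - (tri t (tri y x w) z) + (tri t w (triD mul tri x y z)) + (tri t w (tri x y z)) - (tri t w (tri y x z)) - ((triD mul tri x y (tri t w z)) - (tri (triD mul tri x y t) w z))) = 0.
  { apply/eqP; rewrite subr_eq0; apply/eqP; exact: (P4 x y t w z). }
  have e9 : ((mul (triD mul tri x y z) (mul w t)) + (mul (tri x y z) (mul w t)) - (mul (tri y x z) (mul w t)) - ((triD mul tri x y (mul z (mul w t))) - (mul z (triD mul tri x y (mul w t))))) = 0.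
  { apply/eqP; rewrite subr_eq0; apply/eqP; exact: (P5 x y z (mul w t)). }
  have e10 : ((tri t (triD mul tri x y z) w) + (tri t (tri x y z) w) - (tri t (tri y x z) w) + (tri t z (triD mul tri x y w)) + (tri t z (tri x y w)) - (tri t z (tri y x w)) - ((triD mul tri x y (tri t z w)) - (tri (triD mul tri x y t) z w))) = 0.
  { apply/eqP; rewrite subr_eq0; apply/eqP; exact: (P4 x y t z w). }
  have e11 : ((mul (triD mul tri x y w) (mul z t)) + (mul (tri x y w) (mul z t)) - (mul (tri y x w) (mul z t)) - ((triD mul tri x y (mul w (mul z t))) - (mul w (triD mul tri x y (mul z t))))) = 0.
  { apply/eqP; rewrite subr_eq0; apply/eqP; exact: (P5 x y w (mul z t)). }
  transitivity (0 - (mul ((tri x y (commC mul z w)) - ((mul z (tri x y w)) - (mul w (tri x y z)))) t) + (mul ((mul (triD mul tri x y z) w) + (mul (tri x y z) w) - (mul (tri y x z) w) - ((triD mul tri x y (mul z w)) - (mul z (triD mul tri x y w)))) t) + (mul w ((mul (triD mul tri x y z) t) + (mul (tri x y z) t) - (mul (tri y x z) t) - ((triD mul tri x y (mul z t)) - (mul z (triD mul tri x y t))))) - (mul ((mul (triD mul tri x y w) z) + (mul (tri x y w) z) - (mul (tri y x w) z) - ((triD mul tri x y (mul w z)) - (mul w (triD mul tri x y z)))) t) - (mul z ((mul (triD mul tri x y w) t) + (mul (tri x y w) t) - (mul (tri y x w) t) - ((triD mul tri x y (mul w t)) - (mul w (triD mul tri x y t))))) + (mul ((tri y x (commC mul z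 w)) - ((mul z (tri y x w)) - (mul w (tri y x z)))) t) - ((mul (triD mul tri x y (mul w z)) t) + (mul (tri x y (mul w z)) t) - (mul (tri y x (mul w z)) t) - ((triD mul tri x y (mul (mul w z) t)) - (mul (mul w z) (triD mul tri x y t)))) + ((mul (triD mul tri x y (mul z w)) t) + (mul (tri x y (mul z w)) t) - (mul (tri y x (mul z w)) t) - ((triD mul tri x y (mul (mul z w) t)) - (mul (mul z w) (triD mul tri x y t)))) - ((tri t (triD mul tri x y w) z) + (tri t (tri x y w) z) - (tri t (tri y x w) z) + (tri t w (triD mul tri x y z)) + (tri t w (tri x y z)) - (tri t w (tri y x z)) - ((triD mul tri x y (tri t w z)) - (tri (triD mul tri x y t) w z))) - ((mul (triD mul tri x y z) (mul w t)) + (mul (tri x y z) (mul w t)) - (mul (tri y x z) (mul w t)) - ((triD mul tri x y (mul z (mul w t))) - (mul z (triD mul tri x y (mul w t))))) + ((tri t (triD mul tri x y z) w) + (tri t (tri x y z) w) - (tri t (tri y x z) w) + (tri t z (triD mul tri x y w)) + (tri t z (tri x y w)) - (tri t z (tri y x w)) - ((triD mul tri x y (tri t z w)) - (tri (triD mul tri x y t) z w))) + ((mul (triD mul tri x y w) (mul z t)) + (mul (tri x y w) (mul z t)) - (mul (tri y x w) (mul z t)) - ((triD mul tri x y (mul w (mul z t))) - (mul w (triD mul tri x y (mul z t)))))).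
  { rewrite /triD /assoc /commC; rewrite ?(mD1, mD2, mN1, mN2, tD1, tD2, tD3, tN1, tN2, tN3); zmod_refl. }
  rewrite e0 e1 e2 e3 e4 e5 e6 e7 e8 e9 e10 e11.
  by rewrite ?(addr0, oppr0, add0r).

}
Qed.
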